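(* Let $q$ be a prime power and let $n, t, m$ be positive integers with $t \geq m$. Choose a sequence $S=(g_1,\dots,g_t)$ of $t$ vectors of $\mathbb{F}_q^n$ uniformly at random (each $g_i$ independently and uniformly in $\mathbb{F}_q^n$). Then $$\mathbb{P}[e_m(S)=0]\leq \left(\frac{m}{q}\right)^{n}.$$
   Context: $\mathbb{F}_q^n$ is viewed as a commutative ring with coordinatewise addition and multiplication. For elements $g_1,\dots,g_t$ of a commutative ring, $e_m(g_1,\dots,g_t)=\sum_{1\leq i_1<\cdots<i_m\leq t}\prod_{j=1}^m g_{i_j}$ is the $m$-th elementary symmetric polynomial evaluated at them. *)

(* Defs.v *)
From HB Require Import structures.
From mathcomp Require Import all_boot all_order all_algebra all_field.
Set Implicit Arguments. Unset Strict Implicit. Unset Printing Implicit Defensive.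
Import Order.TTheory GRing.Theory Num.Theory.
Local Open Scope ring_scope.

Definition esym_eval (R : pzSemiRingType) (t m : nat) (g : 'I_t -> R) : R :=
  \sum_(I : {set 'I_t} | #|I| == m) \prod_(i in I) g i.

Notation vec F n := {ffun 'I_n -> F}.

Definition prob_esym_zero (F : finFieldType) (n t m : nat) : rat :=
  (#|[set S : {ffun 'I_t -> vec F n} | esym_eval m S == 0]|%:R
   / #|{ffun 'I_t -> vec F n}|%:R).

(* Main.v *)
Require Import Defs.
From HB Require Import structures.
From mathcomp Require Import all_boot all_order all_algebra all_field.
From mathcomp Require Import ring zify.
Set Implicit Arguments. Unset Strict Implicit. Unset Printing Implicit Defensive.
Import Order.TTheory GRing.Theory Num.Theory.
Local Open Scope ring_scope.
Definition Qc (F : fieldType) t (x : 'I_t -> F) k :=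
  (\prod_(i < t) ((x i)%:P + 'X))`_k.
Definition Zc (F : finFieldType) t k : nat :=
  \sum_(x : {ffun 'I_t -> F}) ((Qc x k == 0)%R : nat).
Definition fcons (F : Type) t (a : F) (y : {ffun 'I_t -> F}) : {ffun 'I_t.+1 -> F} :=
  [ffun i : 'I_t.+1 => if unlift ord0 i is Some j then y j else a].

Lemma Qc_fcons (F : fieldType) t (a : F) (y : {ffun 'I_t -> F}) k :
  Qc (fcons a y) k = a * Qc y k + (if k is k'.+1 then Qc y k' else 0).
Proof.
rewrite /Qc big_ord_recl ffunE unlift_none.
under eq_bigr do rewrite ffunE liftK.
by rewrite mulrDl coefD coefCM coefXM; case: k.
Qed.

Lemma sum_fcons (F : finType) t (f : {ffun 'I_t.+1 -> F} -> nat) :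
  (\sum_(x : {ffun 'I_t.+1 -> F}) f x =
  \sum_(a : F) \sum_(y : {ffun 'I_t -> F}) f (fcons a y))%N.
Proof.
rewrite pair_big /=.
rewrite (reindex (fun p : F * {ffun 'I_t -> F} => fcons p.1 p.2)) //.
exists (fun x : {ffun 'I_t.+1 -> F} => (x ord0, [ffun j : 'I_t => x (lift ord0 j)])).
  move=> [a y] _ /=; congr pair; first by rewrite ffunE unlift_none.
  by apply/ffunP => j; rewrite !ffunE liftK.
move=> x _ /=; apply/ffunP => i; rewrite ffunE.
case: unliftP => [j ->|->]; by rewrite ?ffunE.
Qed.
Lemma count_lin (F : finFieldType) (c0 c1 : F) :
  (\sum_(a : F) ((a * c1 + c0 == 0)%R : nat) <= 1 + (c1 == 0)%R * #|F|.-1)%N.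
Proof.
have q0 : (0 < #|F|)%N by apply/card_gt0P; exists 0.
have [->|c1n0] := eqP.
  rewrite mul1n add1n prednK //.
  rewrite -sum1_card; apply: leq_sum => a _; by case: (_ == _).
rewrite mul0n addn0.
move/eqP: c1n0 => c1n0.
rewrite (eq_bigr (fun a => ((a == - c0 / c1) : nat))); last first.
  move=> a _; congr nat_of_bool; apply/eqP/eqP => [h|->].
    by apply: (mulIf c1n0); rewrite divfK // -(addr0 (- c0)) -h; ring.
  by rewrite divfK //; ring.
rewrite (bigD1 (- c0 / c1)) //= eqxx big1 // => a /negbTE -> //.
Qed.

Lemma Zc_step (F : finFieldType) t k :
  (Zc F t.+1 k <= #|F| ^ t + Zc F t k * #|F|.-1)%N.
Proof.
rewrite /Zc sum_fcons exchange_big /=.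
have -> : (#|F| ^ t = \sum_(y : {ffun 'I_t -> F}) 1)%N.
  by rewrite sum1_card card_ffun card_ord.
rewrite big_distrl /= -big_split /=.
apply: leq_sum => y _.
under eq_bigr do rewrite Qc_fcons.
exact: count_lin.
Qed.
Lemma coef_prodXaddC (R : comNzRingType) t (x : 'I_t -> R) k : (k <= t)%N ->
  (\prod_(i < t) ((x i)%:P + 'X))`_k =
  \sum_(I : {set 'I_t} | #|I| == (t - k)%N) \prod_(i in I) x i.
Proof.
move=> kt.
rewrite bigA_distr /= coef_sum.
transitivity (\sum_(I in {set 'I_t}) if #|I| == (t - k)%N then
                  \prod_(i < t | i \in I) x i else 0).
  apply eq_bigr => I _.
  rewrite big_if/= big_const iter_mulr_1 -rmorph_prod/= coefCM coefXn.
  rewrite -[#|I| == _](eqn_add2r k) subnK//.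
  rewrite -[X in (_ + _)%N == X]card_ord -(cardC I) eqn_add2l.
  by case: ifP; rewrite ?mulr1 ?mulr0.
by rewrite -big_mkcond.
Qed.

Lemma Qc_top (F : fieldType) t (x : 'I_t -> F) : Qc x t = 1.
Proof.
rewrite /Qc coef_prodXaddC // subnn.
rewrite (eq_bigl (fun I : {set 'I_t} => I == set0)); last by move=> I; rewrite cards_eq0.
by rewrite big_pred1_eq big_set0.
Qed.

Lemma Zc_top (F : finFieldType) t : Zc F t t = 0%N.
Proof. by rewrite /Zc big1 // => x _; rewrite Qc_top oner_eq0. Qed.

Lemma Zc_bound (F : finFieldType) t k : (k <= t)%N ->
  (Zc F t k * #|F| <= (t - k) * #|F| ^ t)%N.
Proof.
have q0 : (0 < #|F|)%N by apply/card_gt0P; exists 0.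
elim: t k => [|t IH] k kt.
  by move: kt; rewrite leqn0 => /eqP ->; rewrite Zc_top.
case: (ltngtP k t.+1) kt => // [kt _|-> _]; last by rewrite Zc_top.
have := IH k kt; have := Zc_step F t k.
rewrite expnS.
move: (Zc F t.+1 k) (Zc F t k) (#|F| ^ t)%N q0 => a b Q.
case: #|F| => // p _ /= h1 h2.
have -> : (t.+1 - k = (t - k).+1)%N by rewrite subSn.
nia.
Qed.

Lemma esym_Qc (F : fieldType) t m (x : 'I_t -> F) : (m <= t)%N ->
  esym_eval m x = Qc x (t - m).
Proof. by move=> mt; rewrite /Qc coef_prodXaddC ?leq_subr // subKn. Qed.

Lemma prod_ffun_eval (aT : finType) (R : pzSemiRingType) (I : finType)
  (P : pred I) (f : I -> {ffun aT -> R}) j :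
  (\prod_(i | P i) f i) j = \prod_(i | P i) f i j.
Proof.
apply: (big_morph (fun g : {ffun aT -> R} => g j)).
  by move=> a b; rewrite /GRing.mul /= ffunE.
by rewrite /GRing.one /= ffunE.
Qed.

Lemma esym_eval_ffun (F : finFieldType) n t m (S : {ffun 'I_t -> vec F n}) j :
  esym_eval m S j = esym_eval m [ffun i => S i j].
Proof.
rewrite /esym_eval sum_ffunE; apply: eq_bigr => I _.
by rewrite prod_ffun_eval; apply: eq_bigr => i _; rewrite ffunE.
Qed.

Theorem proposition2p2 (F : finFieldType) (n t m : nat)
  (hn : (0 < n)%N) (ht : (0 < t)%N) (hm : (0 < m)%N) (htm : (m <= t)%N) :
  prob_esym_zero F n t m <= ((m%:R : rat) / (#|F|%:R)) ^+ n.
Proof.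
have q0 : (0 < #|F|)%N by apply/card_gt0P; exists 0.
set A := [set x : {ffun 'I_t -> F} | esym_eval m x == 0].
have hA : #|A| = Zc F t (t - m).
  rewrite /Zc -sum1_card big_mkcond /=.
  apply: eq_bigr => x _; rewrite inE esym_Qc //.
have bA : (#|A| * #|F| <= m * #|F| ^ t)%N.
  by rewrite hA; have := Zc_bound F (leq_subr m t); rewrite subKn.
pose untr (U : {ffun 'I_n -> {ffun 'I_t -> F}}) : {ffun 'I_t -> vec F n} :=
  [ffun i => [ffun j => U j i]].
pose tr (S : {ffun 'I_t -> vec F n}) : {ffun 'I_n -> {ffun 'I_t -> F}} :=
  [ffun j => [ffun i => S i j]].
have trK : cancel untr tr.
  by move=> U; apply/ffunP => j; apply/ffunP => i; rewrite !ffunE.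
have untrK : cancel tr untr.
  by move=> S; apply/ffunP => i; apply/ffunP => j; rewrite !ffunE.
have hS : [set S : {ffun 'I_t -> vec F n} | esym_eval m S == 0] =
          untr @: [set U | U \in ffun_on A].
  apply/setP => S; rewrite inE; apply/idP/imsetP.
    move/eqP => h; exists (tr S); last by rewrite untrK.
    rewrite inE; apply/ffun_onP => j; rewrite inE ffunE.
    by rewrite -esym_eval_ffun h ffunE.
  move=> [U]; rewrite inE => /ffun_onP hU ->; apply/eqP/ffunP => j.
  rewrite esym_eval_ffun ffunE.
  have := hU j; rewrite inE => /eqP <-; congr esym_eval.
  by congr fun_of_fin; apply/ffunP => i; rewrite !ffunE.
rewrite /prob_esym_zero hS card_imset; last exact: can_inj trK.
rewrite cardsE card_ffun_on card_ffun !card_ord card_ffun card_ord.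
rewrite expnAC !natrX -expr_div_n.
apply: lerXn2r; rewrite ?nnegrE ?divr_ge0 ?ler0n ?exprn_ge0 //.
rewrite ler_pdivrMr ?exprn_gt0 ?ltr0n // mulrAC ler_pdivlMr ?ltr0n //.
by rewrite -natrX -!natrM ler_nat.
Qed.
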